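(* For every $\lambda>\lambda^*$, $\dfrac{G(e(\lambda))}{\lambda}<\dfrac{1}{a^*}$, where $a^*=\max_{1\le i\le p}a_i$.
   Context: Standing setup. Let $\gamma>0$; let $a_1,\dots,a_p>0$ with weights $\omega_i>0$, $\sum_i\omega_i=1$, and $b_1,\dots,b_n>0$ with weights $\pi_j>0$, $\sum_j\pi_j=1$. Let $\mu$ be the limiting spectral distribution of $\mathbf{N}\mathbf{N}^T$ where $\mathbf{N}=\mathbf{A}^{1/2}\mathbf{G}\mathbf{B}^{1/2}$ is $k\times l$, $\mathbf{G}$ has iid mean-zero entries of variance $1/l$, $k/l\to\gamma$, and the spectral distributions of $\mathbf{A},\mathbf{B}$ converge to $\nu=\sum_i\omega_i\delta_{a_i}$ and $\underline{\nu}=\sum_j\pi_j\delta_{b_j}$. $\mu$ is a compactly supported probability measure on $[0,\infty)$; $\lambda^*>0$ is the right endpoint of its support, and $s(\lambda)=\int\frac{d\mu(t)}{t-\lambda}$ for $\lambda>\lambda^*$. Define $G(e)=\sum_{j=1}^n\frac{b_j\pi_j}{1+\gamma b_j e}$. It is known (master equations) that there is a continuous (indeed smooth) real function $e(\lambda)$ on $(\lambda^*,\infty)$, never equal to a pole $-1/(\gamma b_j)$ of $G$ and with $a_iG(e(\lambda))\ne\lambda$ for all $i$, satisfying $s(\lambda)=\sum_{i=1}^p\frac{\omega_i}{a_iG(e(\lambda))-\lambda}$ and $e(\lambda)=\sum_{i=1}^p\frac{a_i\omega_i}{a_iG(e(\lambda))-\lambda}$. *)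

(* Defs.v *)
From Stdlib Require Import Reals Lra Lia.
Open Scope R_scope.

Fixpoint sumR (n : nat) (f : nat -> R) : R :=
  match n with
  | O => 0
  | S m => sumR m f + f m
  end.

(* maxR n f = max_{i<n} f i  (for n >= 1 and f > 0; returns 0 when n = 0) *)
Fixpoint maxR (n : nat) (f : nat -> R) : R :=
  match n with
  | O => 0
  | S m => Rmax (maxR m f) (f m)
  end.

Definition Gfun (gamma : R) (n : nat) (b pi : nat -> R) (e : R) : R :=
  sumR n (fun j => b j * pi j / (1 + gamma * b j * e)).

(* A compactly supported Borel probability measure mu with supp mu ⊆ [lo,hi],
   represented (Riesz) by its integration functional I f = ∫ f dmu,
   specified on functions continuous at every point of [lo,hi]. *)
Definition cont_on (lo hi : R) (f : R -> R) : Prop :=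
  forall t, lo <= t <= hi -> continuity_pt f t.

Definition prob_functional (I : (R -> R) -> R) (lo hi : R) : Prop :=
  (forall f g, cont_on lo hi f -> cont_on lo hi g ->
     I (fun t => f t + g t) = I f + I g) /\
  (forall c f, cont_on lo hi f -> I (fun t => c * f t) = c * I f) /\
  (forall f, cont_on lo hi f -> (forall t, lo <= t <= hi -> 0 <= f t) -> 0 <= I f) /\
  I (fun _ => 1) = 1.

(* hi is in the support: mu((hi - eps, hi]) > 0 for every eps > 0,
   expressed via the continuous test function max(0, t - (hi - eps)). *)
Definition right_endpoint_in_support (I : (R -> R) -> R) (hi : R) : Prop :=
  forall eps, 0 < eps -> 0 < I (fun t => Rmax 0 (t - (hi - eps))).

Definition stieltjes (I : (R -> R) -> R) (lam : R) : R :=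
  I (fun t => / (t - lam)).

(* Main.v *)
Require Import Defs.
From Stdlib Require Import Reals.
From Stdlib Require Import Lra Lia Ranalysis5.
Open Scope R_scope.

Lemma cont_const (c x : R) : continuity_pt (fun _ => c) x.
Proof. apply continuity_pt_const. unfold constant. auto. Qed.

Lemma cont_id (x : R) : continuity_pt (fun y => y) x.
Proof. exact (derivable_continuous_pt _ _ (derivable_pt_id x)). Qed.

Lemma sumR_cont n (F : nat -> R -> R) x :
  (forall j, (j < n)%nat -> continuity_pt (F j) x) ->
  continuity_pt (fun y => sumR n (fun j => F j y)) x.
Proof.
  induction n as [|m IH]; intros H; simpl.
  - apply cont_const.
  - apply (continuity_pt_plus (fun y => sumR m (fun j => F j y)) (F m)).
    + apply IH; intros; apply H; lia.
    + apply H; lia.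
Qed.

Lemma sumR_ext n (F G : nat -> R) :
  (forall j, (j < n)%nat -> F j = G j) -> sumR n F = sumR n G.
Proof.
  induction n as [|m IH]; intros H; simpl; auto.
  rewrite IH by (intros; apply H; lia). rewrite H by lia. auto.
Qed.

Lemma sumR_plus n (F G : nat -> R) :
  sumR n (fun j => F j + G j) = sumR n F + sumR n G.
Proof. induction n; simpl; [lra| rewrite IHn; lra]. Qed.

Lemma sumR_scal n c (F : nat -> R) :
  sumR n (fun j => c * F j) = c * sumR n F.
Proof. induction n; simpl; [lra| rewrite IHn; lra]. Qed.

Lemma sumR_le n (F G : nat -> R) :
  (forall j, (j < n)%nat -> F j <= G j) -> sumR n F <= sumR n G.
Proof.
  induction n as [|m IH]; intros H; simpl; [lra|].
  assert (H1 := IH (fun j Hj => H j ltac:(lia))). assert (H2 := H m ltac:(lia)). lra.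
Qed.

Lemma sumR_ge_term n (F : nat -> R) k :
  (forall j, (j < n)%nat -> 0 <= F j) -> (k < n)%nat -> F k <= sumR n F.
Proof.
  induction n as [|m IH]; intros H Hk; simpl; [lia|].
  assert (H0 : 0 <= sumR m F).
  { replace 0 with (sumR m (fun _ => 0)) by (clear; induction m; simpl; lra).
    apply sumR_le; intros; apply H; lia. }
  destruct (Nat.eq_dec k m) as [->|Hne].
  - lra.
  - assert (H1 := IH (fun j Hj => H j ltac:(lia)) ltac:(lia)). assert (H2 := H m ltac:(lia)). lra.
Qed.

Lemma maxR_attained p (a : nat -> R) :
  (forall i, (i < p)%nat -> 0 < a i) ->
  (0 < p)%nat -> exists k, (k < p)%nat /\ maxR p a = a k.
Proof.
  induction p as [|m IH]; intros Ha Hp; [lia|].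
  simpl. destruct m as [|m'].
  - exists 0%nat. split; [lia|]. simpl. unfold Rmax.
    destruct (Rle_dec 0 (a 0%nat)); auto. assert (H := Ha 0%nat ltac:(lia)). lra.
  - destruct (IH (fun i Hi => Ha i ltac:(lia)) ltac:(lia)) as [k [Hk Hm]].
    rewrite Hm. unfold Rmax. destruct (Rle_dec (a k) (a (S m'))).
    + exists (S m'); split; auto.
    + exists k; split; auto.
Qed.

Lemma sumR_nonneg n (F : nat -> R) :
  (forall j, (j < n)%nat -> 0 <= F j) -> 0 <= sumR n F.
Proof.
  intros H. replace 0 with (sumR n (fun _ => 0)) by (clear; induction n; simpl; lra).
  apply sumR_le; auto.
Qed.

Theorem lemma3p6
  (gamma : R) (p n : nat) (a w b pi : nat -> R)
  (I : (R -> R) -> R) (lamstar : R) (e : R -> R) :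
  0 < gamma ->
  (forall i, (i < p)%nat -> 0 < a i) ->
  (forall i, (i < p)%nat -> 0 < w i) ->
  sumR p w = 1 ->
  (forall j, (j < n)%nat -> 0 < b j) ->
  (forall j, (j < n)%nat -> 0 < pi j) ->
  sumR n pi = 1 ->
  0 < lamstar ->
  prob_functional I 0 lamstar ->
  right_endpoint_in_support I lamstar ->
  (forall l, lamstar < l -> continuity_pt e l) ->
  (forall l, lamstar < l -> forall j, (j < n)%nat -> e l <> - / (gamma * b j)) ->
  (forall l, lamstar < l -> forall i, (i < p)%nat ->
       a i * Gfun gamma n b pi (e l) <> l) ->
  (forall l, lamstar < l ->
       stieltjes I l = sumR p (fun i => w i / (a i * Gfun gamma n b pi (e l) - l))) ->
  (forall l, lamstar < l ->
       e l = sumR p (fun i => a i * w i / (a i * Gfun gamma n b pi (e l) - l))) ->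
  forall l, lamstar < l -> Gfun gamma n b pi (e l) / l < / maxR p a.
Proof.
  intros Hg Ha Hw Hsw Hb Hpi Hspi Hls HI _ Hce Hpole Hneq Hs He l Hl.
  destruct HI as [Hadd [Hscal [Hpos H1]]].
  assert (Hp : (0 < p)%nat).
  { destruct p; [simpl in Hsw; lra| lia]. }
  destruct (maxR_attained p a Ha Hp) as [k [Hk Hmax]].
  rewrite Hmax.
  assert (Hak := Ha k Hk).
  set (g := fun x => Gfun gamma n b pi (e x)).
  assert (Hcg : forall x, lamstar < x -> continuity_pt g x).
  { intros x Hx. unfold g, Gfun.
    apply (sumR_cont n (fun j y => b j * pi j / (1 + gamma * b j * e y))).
    intros j Hj. assert (Hbj := Hb j Hj).
    apply (continuity_pt_div (fun _ => b j * pi j) (fun y => 1 + gamma * b j * e y)).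
    - apply cont_const.
    - apply (continuity_pt_plus (fun _ => 1) (fun y => gamma * b j * e y)).
      + apply cont_const.
      + apply (continuity_pt_mult (fun _ => gamma * b j) e).
        * apply cont_const.
        * apply Hce; auto.
    - intro H0. apply (Hpole x Hx j Hj).
      assert (gamma * b j <> 0) by nra.
      apply (Rmult_eq_reg_l (gamma * b j)); auto.
      rewrite <- Ropp_mult_distr_r, Rinv_r by auto. cbv beta in H0. lra. }
  assert (Hid : forall x, lamstar < x -> e x * g x = 1 + x * stieltjes I x).
  { intros x Hx. rewrite (Hs x Hx). rewrite (He x Hx) at 1. unfold g.
    rewrite Rmult_comm, <- sumR_scal, <- Hsw, <- sumR_scal, <- sumR_plus.
    apply sumR_ext. intros i Hi.
    assert (a i * Gfun gamma n b pi (e x) - x <> 0).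
    { intro H0. apply (Hneq x Hx i Hi). lra. }
    field; auto. }
  assert (Hsb : forall x, lamstar < x -> - / (x - lamstar) <= stieltjes I x).
  { intros x Hx. set (c := / (x - lamstar)).
    assert (Hc1 : cont_on 0 lamstar (fun t => / (t - x))).
    { intros t Ht. exact (continuity_pt_inv (fun t => t - x) t
        (continuity_pt_minus (fun t => t) (fun _ => x) t (cont_id t) (cont_const x t))
        ltac:(lra)). }
    assert (Hc2 : cont_on 0 lamstar (fun t => c * 1)).
    { intros t Ht. apply cont_const. }
    assert (Hc3 : cont_on 0 lamstar (fun _ => 1)).
    { intros t Ht. apply cont_const. }
    assert (E1 := Hadd _ _ Hc1 Hc2).
    assert (E2 : I (fun t => c * 1) = c * I (fun _ => 1)) by exact (Hscal c _ Hc3).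
    assert (P : 0 <= I (fun t => / (t - x) + c * 1)).
    { apply Hpos.
      - intros t Ht. apply (continuity_pt_plus (fun t => / (t - x)) (fun t => c * 1)).
        + apply Hc1; auto.
        + apply Hc2; auto.
      - intros t Ht. replace (/ (t - x)) with (- / (x - t)) by (field; lra).
        assert (/ (x - t) <= c) by (apply Rinv_le_contravar; lra). lra. }
    rewrite E1, E2, H1 in P. unfold stieltjes. lra. }
  set (B := sumR n (fun j => b j * pi j)).
  set (Bs := sumR n b).
  assert (HB : 0 <= B).
  { apply sumR_nonneg. intros j Hj. pose proof (Hb j Hj). pose proof (Hpi j Hj). nra. }
  assert (HBs : 0 <= Bs).
  { apply sumR_nonneg. intros j Hj. pose proof (Hb j Hj). lra. }
  set (M := gamma * Bs * a k * lamstar).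
  assert (HM : 0 <= M).
  { unfold M. apply Rmult_le_pos; [|lra]. apply Rmult_le_pos; [|lra]. nra. }
  assert (Key : forall x, lamstar + 1 <= x -> 2 * M + 2 * a k * B + 1 <= x ->
                  a k * g x > x -> False).
  { intros x Hx1 Hx2 Hgx.
    assert (Hx : lamstar < x) by lra.
    assert (Hgpos : 0 < g x) by nra.
    assert (Hid' := Hid x Hx). assert (Hsb' := Hsb x Hx).
    assert (Hc : / (x - lamstar) * (x - lamstar) = 1) by (field; lra).
    assert (Hq : 0 <= x * (x - lamstar) * (stieltjes I x + / (x - lamstar))).
    { apply Rmult_le_pos; [nra|lra]. }
    assert (Heg : e x * g x * (x - lamstar) >= - lamstar) by nra.
    assert (Hee : - e x * (x * (x - lamstar)) <= a k * lamstar).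
    { destruct (Rle_lt_dec 0 (e x)) as [Hep|Hen].
      - assert (0 <= x * (x - lamstar)) by nra. nra.
      - assert (- e x * (x - lamstar) > 0) by nra.
        assert (- e x * (x - lamstar) * x <= - e x * (x - lamstar) * (a k * g x)) by nra.
        nra. }
    assert (Hxx : 2 * M + 1 <= x * (x - lamstar)) by nra.
    assert (Hterm : forall j, (j < n)%nat -> 1/2 <= 1 + gamma * b j * e x).
    { intros j Hj. assert (Hbj := Hb j Hj).
      assert (Hbj' : b j <= Bs).
      { unfold Bs. apply (sumR_ge_term n b j); auto. intros; pose proof (Hb j0 H); lra. }
      destruct (Rle_lt_dec 0 (e x)) as [Hep|Hen].
      - assert (0 <= gamma * b j * e x) by (apply Rmult_le_pos; nra). lra.
      - assert (gamma * b j * (- e x * (x * (x - lamstar))) <= M).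
        { unfold M. assert (gamma * b j * (- e x * (x * (x - lamstar))) <= gamma * b j * (a k * lamstar)).
          { apply Rmult_le_compat_l; nra. }
          assert (gamma * b j * (a k * lamstar) <= gamma * Bs * (a k * lamstar)).
          { apply Rmult_le_compat_r; nra. }
          nra. }
        nra. }
    assert (Hgb : g x <= 2 * B).
    { unfold g, Gfun, B. rewrite <- sumR_scal. apply sumR_le. intros j Hj.
      assert (Hbj := Hb j Hj). assert (Hpj := Hpi j Hj). assert (HD := Hterm j Hj).
      apply (Rmult_le_reg_r (1 + gamma * b j * e x)); [lra|].
      replace (b j * pi j / (1 + gamma * b j * e x) * (1 + gamma * b j * e x))
        with (b j * pi j) by (field; lra).
      assert (0 < b j * pi j) by nra. nra. }
    assert (a k * g x <= a k * (2 * B)) by (apply Rmult_le_compat_l; lra). lra. }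
  assert (Hgoal : a k * g l < l).
  { destruct (Rlt_le_dec (a k * g l) l) as [Hlt|Hge]; auto.
    exfalso.
    assert (Hgt : a k * g l > l).
    { destruct Hge as [Hgt|Heq]; auto. exfalso. apply (Hneq l Hl k Hk). unfold g in Heq. lra. }
    set (L := Rmax l (lamstar + 1) + 2 * M + 2 * a k * B + 1).
    assert (HL1 : l <= Rmax l (lamstar + 1)) by apply Rmax_l.
    assert (HL2 : lamstar + 1 <= Rmax l (lamstar + 1)) by apply Rmax_r.
    assert (0 <= 2 * a k * B) by (apply Rmult_le_pos; lra).
    assert (HLl : l < L) by (unfold L; lra).
    apply (Key L); try (unfold L; lra).
    destruct (Rlt_le_dec L (a k * g L)) as [HH|HH]; [lra|].
    destruct HH as [HH|HH].
    - exfalso.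
      destruct (IVT_interv (fun x => x - a k * g x) l L) as [z [Hz Hz0]].
      + intros y Hy.
        apply (continuity_pt_minus (fun x => x) (fun x => a k * g x)).
        * apply cont_id.
        * apply (continuity_pt_mult (fun _ => a k) g); [apply cont_const| apply Hcg; lra].
      + auto.
      + lra.
      + lra.
      + apply (Hneq z ltac:(lra) k Hk). unfold g in Hz0. lra.
    - exfalso. apply (Hneq L ltac:(lra) k Hk). unfold g in HH. lra. }
  unfold g in Hgoal.
  apply (Rmult_lt_reg_l (a k * l)); [nra|].
  replace (a k * l * (Gfun gamma n b pi (e l) / l)) with (a k * Gfun gamma n b pi (e l))
    by (field; lra).
  replace (a k * l * / a k) with l by (field; lra). lra.
Qed.
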